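(* In the setting of the switching procedure below (with $\lambda=\Theta(\log n)$, $k=\Theta(\lambda\log n)$) and with $D:=\frac{2en\ln n}{k}$, consider the moment when the $(1+1)$ EA phase first holds an individual at distance at most $D$ from the optimum. The expected number of further $(1+1)$ EA iterations until the procedure switches to the $(1+(\lambda,\lambda))$ GA (or finds the optimum) is $O(n\log\log n)$.
   Context: The procedure maximizes $\mathrm{OneMax}(x)=\sum_{i=1}^n x_i$ on $\{0,1\}^n$ (optimum $1^n$; distance = number of zero-bits). It starts from a uniformly random point and runs the $(1+1)$ EA (each iteration: create one offspring by flipping each bit independently with probability $1/n$, accept it if its fitness is at least the current one) until, for the first time, $k$ consecutive $(1+1)$ EA iterations fail to create a strictly better offspring; then it switches irrevocably to the $(1+(\lambda,\lambda))$ GA with population size $\lambda$. Here $\lambda=\lambda(n)=\Theta(\log n)$ and $k=k(n)=\Theta(\lambda\log n)$. *)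

(* Defs.v *)
From HB Require Import structures.
From mathcomp Require Import all_boot all_order all_algebra.
From mathcomp Require Import all_classical all_reals all_analysis.
Set Implicit Arguments. Unset Strict Implicit. Unset Printing Implicit Defensive.
Import Order.TTheory GRing.Theory Num.Theory.
Local Open Scope ring_scope.

Definition bits (n : nat) := {ffun 'I_n -> bool}.

(* OneMax value (number of one-bits) and distance to the optimum 1^n
   (number of zero-bits). *)
Definition onemax (n : nat) (x : bits n) : nat := #|[set i | x i]|.
Definition zeros (n : nat) (x : bits n) : nat := #|[set i | ~~ x i]|.

Definition ham (n : nat) (x y : bits n) : nat := #|[set i | x i != y i]|.

(* Standard bit mutation with rate 1/n: probability that parent x
   produces offspring y. *)
Definition mutP (R : realType) (n : nat) (x y : bits n) : R :=
  (n%:R^-1) ^+ ham x y * (1 - n%:R^-1) ^+ (n - ham x y).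

(* State of the (1+1) EA phase of the switching procedure with switching
   threshold K: the current individual and the number of consecutive
   iterations (since the last strict improvement) without strict improvement. *)
Definition state (n K : nat) := (bits n * 'I_K.+1)%type.

(* The phase is over once K consecutive non-improving iterations occurred
   (switch to the (1+(lambda,lambda)) GA), or the optimum has been found. *)
Definition absorbed (n K : nat) (s : state n K) : bool :=
  (val s.2 == K) || (zeros s.1 == 0%N).

(* Successor state when the offspring is y (elitist acceptance of ties). *)
Definition next_state (n K : nat) (s : state n K) (y : bits n) : state n K :=
  if (onemax s.1 < onemax y)%N then (y, ord0)
  else if onemax y == onemax s.1 then (y, inord (val s.2).+1)
  else (s.1, inord (val s.2).+1).

(* One-step transition kernel, killed on absorbed states. *)
Definition trans (R : realType) (n K : nat) (s s' : state n K) : R :=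
  if absorbed s then 0
  else \sum_(y : bits n) mutP R s.1 y * (next_state s y == s')%:R.

(* Sub-probability distribution at time t of the not-yet-stopped process. *)
Fixpoint distr (R : realType) (n K : nat) (s0 : state n K) (t : nat)
  : {ffun state n K -> R} :=
  match t with
  | 0 => [ffun s => (s == s0)%:R]
  | t'.+1 => [ffun s' => \sum_(s : state n K) distr R s0 t' s * trans R s s']
  end.

(* P(T > t), where T is the number of (1+1) EA iterations until the
   phase ends (switch or optimum found), started from s0. *)
Definition surv (R : realType) (n K : nat) (s0 : state n K) (t : nat) : R :=
  \sum_(s : state n K | ~~ absorbed s) distr R s0 t s.

(* E[T] = sum_{t >= 0} P(T > t), as an extended real (possibly +oo). *)
Definition expected_time (R : realType) (n K : nat) (s0 : state n K) : \bar R :=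
  (\sum_(0 <= t <oo) (surv R s0 t)%:E)%E.

(* Main.v *)
Require Import Defs.
From HB Require Import structures.
From mathcomp Require Import all_boot all_order all_algebra.
From mathcomp Require Import all_classical all_reals all_analysis.
Import Order.TTheory GRing.Theory Num.Theory.
Local Open Scope ring_scope.
From mathcomp Require Import ring lra zify.
Set Implicit Arguments. Unset Strict Implicit. Unset Printing Implicit Defensive.

Section Basics.
Variable n : nat.

Lemma onemax_zeros (x : bits n) : (onemax x + zeros x)%N = n.
Proof.
rewrite /onemax /zeros -[X in _ = X]card_ord -(cardsC [set i | x i]).
congr addn; apply: eq_card => i; rewrite !inE.
by [].
Qed.

Definition flip (x : bits n) (i : 'I_n) : bits n :=
  [ffun j => if j == i then ~~ x j else x j].

Lemma ham_flip (x : bits n) i : ham x (flip x i) = 1%N.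
Proof.
rewrite /ham -(cards1 i); apply: eq_card => j; rewrite !inE ffunE.
by case: (j == i); case: (x j).
Qed.

Lemma onemax_flip (x : bits n) i : ~~ x i -> onemax (flip x i) = (onemax x).+1.
Proof.
move=> xi; rewrite /onemax.
have -> : [set j | flip x i j] = i |: [set j | x j].
  apply/setP => j; rewrite !inE ffunE.
  by case: (eqVneq j i) => [->|]; rewrite ?xi.
by rewrite cardsU1 inE xi.
Qed.

Lemma flip_inj (x : bits n) : injective (flip x).
Proof.
move=> i j /ffunP /(_ i); rewrite !ffunE eqxx.
by case: (eqVneq i j) => // _; case: (x i).
Qed.

End Basics.

Section Mut.
Variable R : realType.
Variable n : nat.
Hypothesis n0 : (0 < n)%N.

Let p : R := n%:R^-1.
Lemma p_ge0 : 0 <= p. Proof. by rewrite invr_ge0. Qed.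
Lemma p_le1 : p <= 1.
Proof. by rewrite invf_le1 ?ler1n ?ltr0n. Qed.

Lemma mutP_ge0 (x y : bits n) : 0 <= mutP R x y.
Proof.
by rewrite /mutP mulr_ge0 // exprn_ge0 // ?p_ge0 // subr_ge0 p_le1.
Qed.

Lemma mutP_prod (x y : bits n) :
  mutP R x y = \prod_i (if x i != y i then p else 1 - p).
Proof.
rewrite (bigID (fun i => x i != y i)) /=.
rewrite (eq_bigr (fun _ => p)); last by move=> i ->.
rewrite [X in _ * X](eq_bigr (fun _ => 1 - p)); last by move=> i /negbTE ->.
rewrite !prodr_const /mutP /ham; congr (_ ^+ _ * _ ^+ _).
  by rewrite cardsE.
set S := [set i | x i != y i].
have e : (#|S| + #|(fun i => ~~ (x i != y i))|)%N = n.
  rewrite -[RHS](card_ord n) -(cardsC S); congr addn; apply: eq_card => i; by rewrite !inE.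
apply/eqP; rewrite eq_sym -(eqn_add2l #|S|) subnKC; first by rewrite e.
by rewrite -[X in (_ <= X)%N]e leq_addr.
Qed.

Lemma mutP_sum (x : bits n) : \sum_(y : bits n) mutP R x y = 1.
Proof.
rewrite (eq_bigr _ (fun y _ => mutP_prod x y)).
rewrite -(bigA_distr_bigA (fun i b => if x i != b then p else 1 - p)) /=.
rewrite big1 // => i _; rewrite big_bool /=.
by case: (x i) => /=; [rewrite subrK | rewrite addrC subrK].
Qed.

End Mut.


Section Impr.
Variable R : realType.
Variable n : nat.
Hypothesis n0 : (0 < n)%N.
Let p : R := n%:R^-1.

Lemma pbound : (expR 1 * n%:R)^-1 <= p * (1 - p) ^+ n.-1.
Proof.
have ge1: (1 <= n%:R :> R) by rewrite ler1n.
rewrite invfM mulrC /p ler_pM2l ?invr_gt0 ?ltr0n //.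
case: n n0 ge1 => // m _ ge1 /=.
case: m ge1 => [|m] ge1.
  by rewrite expr0 invf_le1 // ?expR_gt0 // -expR0 ler_expR.
have mpos : (0 < m.+1%:R :> R) by rewrite ltr0n.
have e1 : 1 - (m.+2%:R)^-1 = (1 + (m.+1%:R)^-1)^-1 :> R.
  rewrite -[m.+2]addn1 natrD; field.
  by apply/andP; split; rewrite lt0r_neq0 // ltr_wpDl.
rewrite e1 exprVn lef_pV2 ?posrE ?expR_gt0 ?exprn_gt0 ?ltr_wpDl ?invr_ge0 //.
have h := expR_ge1Dx ((m.+1%:R)^-1 : R).
apply: (@le_trans _ _ (expR ((m.+1%:R)^-1) ^+ m.+1)).
  by rewrite lerXn2r // ?nnegrE ?ltW ?expR_gt0 // ltr_wpDl // ?invr_ge0 ?ltW.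
by rewrite -expRM_natl mulfV ?lt0r_neq0.
Qed.

Lemma impr_ge (x : bits n) :
  (zeros x)%:R * (p * (1 - p) ^+ n.-1) <=
  \sum_(y : bits n | (onemax x < onemax y)%N) mutP R x y.
Proof.
have mf i : mutP R x (flip x i) = p * (1 - p) ^+ n.-1.
  by rewrite /mutP ham_flip expr1 subn1.
have -> : (zeros x)%:R * (p * (1 - p) ^+ n.-1) =
   \sum_(i in [set i | ~~ x i]) mutP R x (flip x i).
  by rewrite (eq_bigr _ (fun i _ => mf i)) sumr_const mulr_natl.
rewrite -big_imset /=; last by move=> i j _ _; apply: flip_inj.
rewrite big_mkcond [X in _ <= X]big_mkcond /=; apply: ler_sum => y _.
case: ifP => hy; last by case: ifP => _ //; apply: mutP_ge0.
case/imsetP: hy => i; rewrite inE => xi ->.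
by rewrite onemax_flip // ltnSn.
Qed.

End Impr.

Section Potential.
Variable R : realType.
Variables n K : nat.
Hypothesis n0 : (0 < n)%N.

Lemma trans_ge0 (s s' : state n K) : 0 <= trans R s s'.
Proof.
rewrite /trans; case: ifP => // _; apply: sumr_ge0 => y _.
by rewrite mulr_ge0 ?mutP_ge0.
Qed.

Lemma distr_ge0 s0 t (s : state n K) : 0 <= distr R s0 t s.
Proof.
elim: t s => [|t IH] s /=; rewrite ffunE //.
by apply: sumr_ge0 => s' _; rewrite mulr_ge0 ?trans_ge0.
Qed.

Variable V : state n K -> R.
Hypothesis V0 : forall s, 0 <= V s.
Hypothesis Vd : forall s, ~~ absorbed s ->
  1 + \sum_(s' : state n K) trans R s s' * V s' <= V s.

Let M s0 t := \sum_(s : state n K) distr R s0 t s * V s.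

Lemma M_step s0 t : M s0 t.+1 + surv R s0 t <= M s0 t.
Proof.
rewrite /M /surv /=.
have -> : \sum_(s' : state n K) [ffun s'0 => \sum_s distr R s0 t s * trans R s s'0] s' * V s'
   = \sum_(s : state n K) distr R s0 t s * (\sum_(s' : state n K) trans R s s' * V s').
  rewrite (eq_bigr (fun s' => \sum_s distr R s0 t s * trans R s s' * V s')); last first.
    by move=> s' _; rewrite ffunE mulr_suml.
  rewrite exchange_big /=; apply: eq_bigr => s _; rewrite mulr_sumr.
  by apply: eq_bigr => s' _; rewrite mulrA.
rewrite (bigID (@absorbed n K)) /= big1 ?add0r; last first.
  move=> s abs; rewrite big1 ?mulr0 // => s' _.
  by rewrite /trans abs mul0r.
rewrite -big_split /= [X in _ <= X](bigID (@absorbed n K)) /=.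
rewrite -[X in X <= _]add0r; apply: lerD.
  by apply: sumr_ge0 => s _; rewrite mulr_ge0 ?distr_ge0.
apply: ler_sum => s abs.
by rewrite -[X in _ + X]mulr1 -mulrDr ler_wpM2l ?distr_ge0 // addrC Vd.
Qed.

Lemma partial_le s0 T : \sum_(0 <= t < T) surv R s0 t <= V s0.
Proof.
have : \sum_(0 <= t < T) surv R s0 t + M s0 T <= V s0.
  elim: T => [|T IH].
    rewrite big_geq // add0r /M (bigD1 s0) //= ffunE eqxx mul1r big1 ?addr0 //.
    by move=> s /negbTE; rewrite ffunE => ->; rewrite mul0r.
  rewrite big_nat_recr //=; apply: le_trans IH.
  by rewrite -addrA lerD2l addrC M_step.
move=> h; apply: le_trans h; rewrite lerDl /M.
by apply: sumr_ge0 => s _; rewrite mulr_ge0 ?distr_ge0.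
Qed.

Lemma surv_ge0 (s0 : state n K) t : 0 <= surv R s0 t.
Proof. by apply: sumr_ge0 => s _; apply: distr_ge0. Qed.

Lemma expected_le s0 : (expected_time R s0 <= (V s0)%:E)%E.
Proof.
rewrite /expected_time; apply: lime_le.
  by apply: is_cvg_nneseries => t _ _; rewrite lee_fin surv_ge0.
by apply: nearW => N; rewrite sumEFin lee_fin partial_le.
Qed.

End Potential.


Section Drift.
Variable R : realType.
Variables n K : nat.
Hypothesis n0 : (0 < n)%N.

Let a : R := expR 1 * n%:R.

Lemma a_pos : 0 < a.
Proof. by rewrite /a mulr_gt0 ?expR_gt0 ?ltr0n. Qed.

Lemma n_le_a : n%:R <= a.
Proof.
rewrite /a ler_peMl ?ler0n //.
by have := expR_ge1Dx (0 : R); rewrite addr0 expR0 => _; rewrite -expR0 ler_expR.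
Qed.

Definition mm (j d : nat) : R := Num.min j%:R (a / d%:R).
Definition W (j : nat) : R := \sum_(0 <= i < j) mm K i.+1.

Definition V (s : state n K) : R :=
  if absorbed s then 0 else mm (K - val s.2) (zeros s.1) + W (zeros s.1).-1.

Lemma mm_ge0 j d : 0 <= mm j d.
Proof.
rewrite /mm le_min ler0n /= divr_ge0 ?ler0n //; exact: ltW a_pos.
Qed.

Lemma W_ge0 j : 0 <= W j.
Proof. by apply: sumr_ge0 => i _; apply: mm_ge0. Qed.

Lemma W_S j : W j.+1 = W j + mm K j.+1.
Proof. by rewrite /W big_nat_recr. Qed.

Lemma W_mono i j : (i <= j)%N -> W i <= W j.
Proof.
move=> /subnK <-; elim: (j - i)%N => [|k IH] //.
by rewrite addSn W_S; apply: le_trans IH _; rewrite lerDl mm_ge0.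
Qed.

Lemma V_ge0 s : 0 <= V s.
Proof. by rewrite /V; case: ifP => // _; rewrite addr_ge0 ?mm_ge0 ?W_ge0. Qed.

Lemma V_init (x : bits n) : V (x, ord0) <= W (zeros x).
Proof.
rewrite /V; case: ifP => [_|]; first exact: W_ge0.
rewrite /absorbed /= subn0 => /norP [_ hz].
by case: (zeros x) hz => // d _ /=; rewrite W_S addrC.
Qed.

Lemma zeros_lt (x y : bits n) : (onemax x < onemax y)%N -> (zeros y < zeros x)%N.
Proof. by have := onemax_zeros x; have := onemax_zeros y; lia. Qed.

Lemma zeros_eq (x y : bits n) : onemax y = onemax x -> zeros y = zeros x.
Proof. by have := onemax_zeros x; have := onemax_zeros y; lia. Qed.

Lemma V_next (s : state n K) (y : bits n) : ~~ absorbed s ->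
  V (next_state s y) <= W (zeros s.1).-1 +
    (if (onemax s.1 < onemax y)%N then 0 else mm (K - (val s.2).+1) (zeros s.1)).
Proof.
case: s => x c /= nabs.
have cK : (val c < K)%N.
  move: nabs; rewrite /absorbed /= => /norP [h _].
  by have := ltn_ord c; rewrite ltnS leq_eqVlt (negbTE h).
rewrite /next_state /=; case: ifP => hi.
  rewrite addr0; apply: le_trans (V_init y) _; apply: W_mono.
  by have := zeros_lt hi; case: (zeros x).
have Hz : forall z : bits n, zeros z = zeros x ->
   V (z, inord (val c).+1) <= W (zeros x).-1 + mm (K - (val c).+1) (zeros x).
  move=> z hz; rewrite /V; case: ifP => _.
    by rewrite addr_ge0 ?mm_ge0 ?W_ge0.
  by rewrite /= inordK ?ltnS // hz addrC.
case: ifP => he; first by apply: Hz; apply: zeros_eq; apply/eqP.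
exact: Hz.
Qed.

Lemma trans_sum (s : state n K) : ~~ absorbed s ->
  \sum_(s' : state n K) trans R s s' * V s' =
  \sum_(y : bits n) mutP R s.1 y * V (next_state s y).
Proof.
move=> nabs; rewrite /trans (negbTE nabs).
rewrite (eq_bigr (fun s' => \sum_y mutP R s.1 y * (next_state s y == s')%:R * V s'));
  last by move=> s' _; rewrite mulr_suml.
rewrite exchange_big /=; apply: eq_bigr => y _.
rewrite (bigD1 (next_state s y)) //= eqxx mulr1 big1 ?addr0 // => s' hs'.
by rewrite eq_sym (negbTE hs') mulr0 mul0r.
Qed.

Lemma mm_drift j d : (0 < d)%N -> (d <= n)%N ->
  1 + mm j d * (1 - d%:R / a) <= mm j.+1 d.
Proof.
move=> d0 dn.
set u := a / d%:R.
have dpos : 0 < d%:R :> R by rewrite ltr0n.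
have u1 : 1 <= u.
  rewrite /u ler_pdivlMr // mul1r; apply: le_trans n_le_a; by rewrite ler_nat.
have e : d%:R / a = u^-1 by rewrite /u invf_div.
rewrite e.
have v0 : 0 <= 1 - u^-1 by rewrite subr_ge0 invf_le1 // (lt_le_trans ltr01 u1).
have v1 : 1 - u^-1 <= 1 by rewrite lerBlDr lerDl invr_ge0 (le_trans ler01 u1).
have m0 := mm_ge0 j d.
rewrite /mm -/u in m0 *.
case: (leP (j.+1%:R) u) => hj.
  have : Num.min j%:R u <= j%:R by rewrite ge_min lexx.
  rewrite -natr1 => h; rewrite addrC lerD2r.
  by apply: le_trans h; rewrite ler_piMr.
have h : Num.min j%:R u <= u by rewrite ge_min lexx orbT.
apply: (@le_trans _ _ (1 + u * (1 - u^-1))).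
  by rewrite lerD2l ler_wpM2r.
rewrite mulrBr mulr1 mulfV; first by rewrite addrC subrK.
by rewrite gt_eqF // (lt_le_trans ltr01 u1).
Qed.

Lemma V_drift s : ~~ absorbed s ->
  1 + \sum_(s' : state n K) trans R s s' * V s' <= V s.
Proof.
move=> nabs; rewrite trans_sum //.
case: s nabs => x c nabs /=.
have [cK dpos] : (val c < K)%N /\ (0 < zeros x)%N.
  move: nabs; rewrite /absorbed /= => /norP [h h2]; split; last by rewrite lt0n.
  by have := ltn_ord c; rewrite ltnS leq_eqVlt (negbTE h).
set d := zeros x.
set w := W d.-1.
set m := mm (K - (val c).+1) d.
have step : \sum_(y : bits n) mutP R x y * V (next_state (x, c) y) <=
   w + m * \sum_(y : bits n | ~~ (onemax x < onemax y)%N) mutP R x y.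
  apply: (@le_trans _ _ (\sum_(y : bits n) mutP R x y *
     (w + (if (onemax x < onemax y)%N then 0 else m)))).
    by apply: ler_sum => y _; rewrite ler_wpM2l ?mutP_ge0 // V_next.
  rewrite (eq_bigr (fun y => mutP R x y * w +
      (if ~~ (onemax x < onemax y)%N then mutP R x y * m else 0))); last first.
    by move=> y _; rewrite mulrDr; case: ifP => _ //=; rewrite mulr0.
  rewrite big_split /= -mulr_suml mutP_sum // mul1r -big_mkcond /=.
  by rewrite mulr_sumr; apply: lerD => //; apply: ler_sum => y _; rewrite mulrC.
have hsum : \sum_(y : bits n | ~~ (onemax x < onemax y)%N) mutP R x y <= 1 - d%:R / a.
  have := (@mutP_sum R n x); rewrite (bigID (fun y => (onemax x < onemax y)%N)) /=.
  set S1 := \sum_(y : bits n | (onemax x < onemax y)%N) mutP R x y.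
  set S2 := \sum_(y : bits n | ~~ (onemax x < onemax y)%N) mutP R x y.
  move=> e; apply: (@le_trans _ _ (1 - S1)).
    by rewrite -e addrC addrK.
  rewrite lerD2l lerN2.
  apply: le_trans (@impr_ge R n n0 x).
  rewrite -/d ler_wpM2l ?ler0n //.
  by apply: le_trans (@pbound R n n0); rewrite /a.
apply: le_trans (lerD (lexx 1) step) _.
have -> : V (x, c) = mm (K - val c) d + w by rewrite /V ifF //; apply/negbTE.
rewrite addrCA [X in _ <= X]addrC lerD2l.
have hKc : (K - val c = (K - (val c).+1).+1)%N by lia.
rewrite hKc.
apply: le_trans (mm_drift _ dpos _); last first.
  by have := onemax_zeros x; rewrite -/d; lia.
by rewrite lerD2l ler_wpM2l ?mm_ge0.
Qed.

End Drift.

Section Bound.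
Variable R : realType.

Lemma min_bound (K a y : R) : 0 < K -> 0 < a -> 0 < y ->
  Num.min K (a / y) <= 2 * a / (y + a / K).
Proof.
move=> K0 a0 y0; set t := a / K.
have t0 : 0 < t by rewrite divr_gt0.
have yt : 0 < y + t by rewrite addr_gt0.
case: (leP y t) => hy.
  apply: (@le_trans _ _ K); first by rewrite ge_min lexx.
  rewrite ler_pdivlMr //.
  have Kt : K * t = a by rewrite /t mulrCA mulfV ?gt_eqF // mulr1.
  have : K * y <= K * t by rewrite ler_pM2l.
  rewrite mulrDr; lra.
apply: (@le_trans _ _ (a / y)); first by rewrite ge_min lexx orbT.
rewrite ler_pdivlMr //.
have ay : a / y * y = a by rewrite mulfVK ?gt_eqF.
have : a / y * t <= a / y * y by rewrite ler_pM2l ?divr_gt0 // ltW.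
rewrite mulrDr; lra.
Qed.

Lemma ln_step (y : R) : 1 < y -> y^-1 <= ln y - ln (y - 1).
Proof.
move=> y1.
have y0 : 0 < y by apply: lt_trans y1.
have h := @le_ln1Dx R (- y^-1).
have : ln (1 - y^-1) <= - y^-1.
  apply: h; rewrite ltrN2 invf_lt1 //.
have -> : 1 - y^-1 = (y - 1) * y^-1 by field; rewrite gt_eqF.
rewrite lnM ?posrE ?subr_gt0 ?invr_gt0 // lnV ?posrE //.
move=> H; rewrite lerBrDl; lra.
Qed.

End Bound.

Lemma W_bound (R : realType) n K j : (0 < n)%N -> (0 < K)%N ->
  W R n K j <= 2 * (expR 1 * n%:R) *
     (ln (j%:R + expR 1 * n%:R / K%:R) - ln (expR 1 * n%:R / K%:R)).
Proof.
move=> n0 K0.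
set a := expR 1 * n%:R.
have a0 : 0 < a by rewrite mulr_gt0 ?expR_gt0 ?ltr0n.
set t := a / K%:R.
have t0 : 0 < t by rewrite divr_gt0 ?ltr0n.
have -> : ln (j%:R + t) - ln t =
    \sum_(0 <= i < j) (ln (i.+1%:R + t) - ln (i%:R + t)).
  by rewrite (telescope_sumr (fun i => ln (i%:R + t))) // add0r.
rewrite mulr_sumr; apply: ler_sum => i _.
rewrite /mm.
rewrite -/a.
have Kp : 0 < K%:R :> R by rewrite ltr0n.
have ip : 0 < i.+1%:R :> R by rewrite ltr0n.
apply: le_trans (min_bound Kp a0 ip) _.
change (a / K%:R) with t.
rewrite ler_pM2l ?mulr_gt0 //.
have := ln_step (_ : 1 < i.+1%:R + t); rewrite -natr1 addrAC addrK; apply.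
have := ler0n R i; lra.
by rewrite ltr0n.
Qed.

Unset Implicit Arguments.
Unset Strict Implicit.

Theorem lemma5p3 (R : realType) (lam k : nat -> nat)
  (a1 a2 b1 b2 : R) (N0 : nat) :
  0 < a1 -> 0 < b1 ->
  (forall n : nat, (N0 <= n)%N ->
     a1 * ln (n%:R) <= (lam n)%:R /\ (lam n)%:R <= a2 * ln (n%:R)) ->
  (forall n : nat, (N0 <= n)%N ->
     b1 * ((lam n)%:R * ln (n%:R)) <= (k n)%:R /\
     (k n)%:R <= b2 * ((lam n)%:R * ln (n%:R))) ->
  exists (C : R) (N : nat), forall n : nat, (N <= n)%N ->
    forall x : bits n,
      (zeros x)%:R <= 2 * expR (1 : R) * n%:R * ln (n%:R) / (k n)%:R ->
      (expected_time R ((x, ord0) : state n (k n))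
         <= (C * (n%:R * ln (ln (n%:R))))%:E)%E.
Proof.
move=> _ _ _ _.
exists (4 * expR 1), (Num.Def.archi_bound (expR (3 : R))).
move=> n Nn x hx.
have n3 : expR 3 < (n%:R : R).
  have h := archi_boundP (expR_ge0 (3:R)).
  apply: lt_le_trans h _; by rewrite ler_nat.
have npos : (0 < n)%N by rewrite -(ltr0n R); apply: lt_trans n3; apply: expR_gt0.
have L3 : 3 <= ln (n%:R : R).
  rewrite -[X in X <= _](expRK (3 : R)) ler_ln ?posrE ?expR_gt0 ?ltW //.
  by apply: lt_trans n3; apply: expR_gt0.
set L := ln (n%:R : R) in hx L3 *.
have lnL0 : 0 <= ln L by apply: ln_ge0; lra.
apply: le_trans (expected_le npos (V_ge0 R npos) (V_drift R npos) (x, ord0)) _.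
rewrite lee_fin; apply: le_trans (V_init R (k n) npos x) _.
move: hx; case: (zeros x) => [|j] hx.
  by rewrite /W big_geq // mulr_ge0 ?mulr_ge0 ?expR_ge0 ?ler0n.
have K0 : (0 < k n)%N.
  case: (posnP (k n)) => // Kn; move: hx; rewrite Kn invr0 mulr0.
  move=> hx; have h : 0 < (j.+1)%:R :> R by rewrite ltr0n.
  by have := lt_le_trans h hx; rewrite ltxx.
set K := k n in hx K0 *.
apply: le_trans (W_bound R j.+1 npos K0) _.
set a := expR 1 * n%:R.
have a0 : 0 < a by rewrite mulr_gt0 ?expR_gt0 ?ltr0n.
have Kp : 0 < K%:R :> R by rewrite ltr0n.
set t := a / K%:R.
have t0 : 0 < t by rewrite divr_gt0.
set y := j.+1%:R : R.
have y0 : 0 < y by rewrite ltr0n.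
have -> : ln (y + t) - ln t = ln (1 + y / t).
  have -> : y + t = t * (1 + y / t) by field; rewrite gt_eqF.
  rewrite lnM ?posrE //; first by rewrite addrAC subrr add0r.
  by rewrite addr_gt0 ?divr_gt0.
have hyt : y / t <= 2 * L.
  rewrite /t invf_div mulrA ler_pdivrMr //.
  move: hx; rewrite -/y ler_pdivlMr // => hx.
  apply: le_trans hx _; rewrite /a.
  have -> : 2 * L * (expR 1 * n%:R) = 2 * expR 1 * n%:R * L by ring.
  by [].
have h2 : ln (1 + y / t) <= 2 * ln L.
  apply: (@le_trans _ _ (ln (L ^+ 2))); last by rewrite lnXn; [rewrite mulr2n; lra | lra].
  rewrite ler_ln ?posrE ?exprn_gt0 ?addr_gt0 ?divr_gt0 //; try lra.
  by rewrite expr2; nra.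
have : 2 * a * ln (1 + y / t) <= 2 * a * (2 * ln L).
  by rewrite ler_pM2l // mulr_gt0.
move=> h; apply: le_trans h _; rewrite /a.
have -> : 2 * (expR 1 * n%:R) * (2 * ln L) = 4 * expR 1 * (n%:R * ln L) by ring.
by [].
Qed.
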